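(* Let $G=K_n$ be the complete graph of order $n\geq 3$, let $g:V(G_1)\to V(G_2)$ be a function with image $I=\{v_1,\dots,v_s\}$ ($s=|I|$), let $n_i=|\{u\in V(G_1): g(u)=v_i\}|$ for $1\le i\le s$, and let $m=|\{i: 1\le i\le s,\ n_i=1\}|$. If $2\leq m\leq s$, then $Dist(F_G)\geq \psi(m)$.
   Context: $Dist(H)$ is the least $t$ such that $H$ has a labeling $V(H)\to\{1,\dots,t\}$ preserved by no non-identity automorphism of $H$. Functigraph: for disjoint copies $G_1,G_2$ of $G$ and a function $g:V(G_1)\to V(G_2)$, $F_G$ has vertex set $V(G_1)\cup V(G_2)$ and edge set $E(G_1)\cup E(G_2)\cup\{uv: u\in V(G_1),\ g(u)=v\}$. The function $\psi:\mathbb{N}\setminus\{1\}\to\mathbb{N}\setminus\{1\}$ is defined by $\psi(m)=k$, where $k$ is the least number (with $k\ge2$) such that $m\leq 2\binom{k}{2}+k$. *)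

(* Defs.v *)
From mathcomp Require Import all_boot all_fingroup.
Set Implicit Arguments. Unset Strict Implicit. Unset Printing Implicit Defensive.

Definition is_aut (V : finType) (adj : rel V) (s : {perm V}) : bool :=
  [forall x, forall y, adj (s x) (s y) == adj x y].

(* There is a labeling with labels in {1,..,t} (encoded as 'I_t) preserved
   by no non-identity automorphism. *)
Definition distinguishing (V : finType) (adj : rel V) (t : nat) : bool :=
  [exists f : {ffun V -> 'I_t},
     [forall s : {perm V},
        (is_aut adj s && [forall x, f (s x) == f x]) ==> (s == 1%g)]].

Lemma distinguishing_exists (V : finType) (adj : rel V) :
  exists t, distinguishing adj t.
Proof.
exists #|V|; apply/existsP; exists [ffun x => enum_rank x].
apply/forallP=> s; apply/implyP=> /andP[_ /forallP H].
apply/eqP/permP=> x; rewrite perm1.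
by have := H x; rewrite !ffunE => /eqP /enum_rank_inj.
Qed.

Definition Dist (V : finType) (adj : rel V) : nat :=
  ex_minn (distinguishing_exists adj).

Definition Kn_adj (n : nat) : rel 'I_n := fun x y => x != y.

(* Functigraph F_G for a graph adj on V and g : V(G1) -> V(G2);
   G1 = inl copy, G2 = inr copy. *)
Definition functigraph (V : finType) (adj : rel V) (g : V -> V) : rel (V + V) :=
  fun a b =>
    match a, b with
    | inl x, inl y => adj x y
    | inr x, inr y => adj x y
    | inl u, inr v => g u == v
    | inr v, inl u => g u == v
    end.

Lemma psi_exists (m : nat) : exists k, (2 <= k) && (m <= 2 * 'C(k, 2) + k).
Proof. exists m.+2; apply/andP; split=> //; apply: leq_trans (leq_addl _ _); exact: leq_trans (leqnSn _) (leqnSn _). Qed.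

Definition psi (m : nat) : nat := ex_minn (psi_exists m).

(* Main.v *)
Require Import Defs.
From mathcomp Require Import all_boot all_fingroup.
From mathcomp Require Import zify.

Set Implicit Arguments. Unset Strict Implicit. Unset Printing Implicit Defensive.

Lemma sq_bin2 (D : nat) : D * D = 2 * 'C(D, 2) + D.
Proof.
elim: D => [//|D IH]; rewrite binS bin1; lia.
Qed.

Section Main.
Variables (n : nat) (g : 'I_n -> 'I_n).

Definition pre (v : 'I_n) : 'I_n := odflt v [pick u | g u == v].

Definition M := [set v : 'I_n | #|[set u | g u == v]| == 1].

Lemma preP v : v \in M -> g (pre v) = v /\ forall x, g x = v -> x = pre v.
Proof.
rewrite inE => /cards1P [u Hu].
have Hx : forall x, g x = v -> x = u.
  by move=> x gx; apply/set1P; rewrite -Hu inE gx.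
have gu : g u = v by apply/eqP; move: (set11 u); rewrite -Hu inE.
rewrite /pre; case: pickP => [x /eqP gx /=|H]; last by have := H u; rewrite gu eqxx.
split; first by [].
by move=> y /Hx ->; rewrite (Hx x gx).
Qed.

Section Swap.
Variables (a b v w : 'I_n).
Definition sw (x : 'I_n + 'I_n) : 'I_n + 'I_n :=
  match x with inl x => inl (tperm a b x) | inr y => inr (tperm v w y) end.
Lemma swK : involutive sw.
Proof. by case=> x /=; rewrite tpermK. Qed.
Definition swp : {perm 'I_n + 'I_n} := perm (can_inj swK).
End Swap.

Lemma main_bound t : distinguishing (functigraph (@Kn_adj n) g) t -> #|M| <= t * t.
Proof.
move=> /existsP [f /forallP Hf].
pose h v := (f (inl (pre v)), f (inr v)).
have inj : {in M &, injective h}.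
  move=> v w vM wM /= [E1 E2].
  apply/eqP; apply/negPn/negP => nvw.
  have [gv pv] := preP vM; have [gw pw] := preP wM.
  set a := pre v in gv pv E1; set b := pre w in gw pw E1.
  have nab : a != b by apply/eqP => ab; move: nvw; rewrite -gv -gw ab eqxx.
  have key : forall x, g (tperm a b x) = tperm v w (g x).
    move=> x; case: tpermP => [->|->|xa xb]; first by rewrite gv gw tpermL.
      by rewrite gv gw tpermR.
    rewrite tpermD //; apply/eqP => E.
      by apply: xa; apply: pv; apply/eqP; rewrite E.
    by apply: xb; apply: pw; apply/eqP; rewrite E.
  have := Hf (swp a b v w); rewrite implybE => /orP [].
    rewrite negb_and => /orP [] /negP []; last first.
      apply/forallP => x; rewrite permE; case: x => x /=.
        by case: tpermP => [->|->|] //; rewrite E1.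
      by case: tpermP => [->|->|] //; rewrite E2.
    apply/forallP => x; apply/forallP => y; rewrite !permE.
    case: x => x; case: y => y /=; rewrite /Kn_adj.
    - by rewrite (inj_eq perm_inj).
    - by rewrite key (inj_eq perm_inj).
    - by rewrite key (inj_eq perm_inj).
    - by rewrite (inj_eq perm_inj).
  move=> /eqP /permP /(_ (inl a)); rewrite perm1 permE /= tpermL => [[E]].
  by move: nab; rewrite E eqxx.
rewrite -(card_in_imset inj).
apply: leq_trans (max_card _) _.
by rewrite card_prod card_ord.
Qed.

End Main.

Theorem proposition3p2 (n : nat) (g : 'I_n -> 'I_n) :
  3 <= n ->
  let s := #|[set g u | u in 'I_n]| in
  let m := #|[set v : 'I_n | #|[set u | g u == v]| == 1]| in
  2 <= m <= s ->
  psi m <= Dist (functigraph (@Kn_adj n) g).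
Proof.
move=> _ s m /andP [m2 _].
rewrite /Dist; case: ex_minnP => D HD _.
have := main_bound HD; rewrite -/(M g) => HmD.
rewrite /psi; case: ex_minnP => k _ Hk; apply: Hk.
rewrite -sq_bin2.
have -> : m = #|M g| by [].
apply/andP; split; last by [].
rewrite -/m in HmD *.
nia.
Qed.
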